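(* Let $n \ge m \ge r \ge 2$ be integers, $\delta\in[0,1/m]$ a real number, and $F$ an $m$-vertex $r$-graph. Suppose $t$ is a positive integer with $$t \le \min\left\{\frac{\delta m n}{r-1} - r,\ \frac{n}{m}\right\}.$$ Then every $n$-vertex $r$-graph $\mathcal{H}$ that does not contain $t+1$ pairwise vertex-disjoint copies of $F$ and satisfies $\Delta(\mathcal{H}) \le (1/m - \delta)\binom{n-1}{r-1}$ has $$|\mathcal{H}| \le \binom{n}{r} - \binom{n-t}{r} + \mathrm{ex}(n-t,F).$$
   Context: An $r$-graph is a set of $r$-element subsets (edges) of a finite vertex set; $|\mathcal{H}|$ is its number of edges and $\Delta(\mathcal{H})$ its maximum degree. $\mathrm{ex}(n,F)$ is the maximum number of edges in an $n$-vertex $r$-graph with no copy of $F$. *)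

(* Defs.v *)
From mathcomp Require Import all_boot all_order all_algebra.
Set Implicit Arguments. Unset Strict Implicit. Unset Printing Implicit Defensive.

Definition hypergraph (n : nat) := {set {set 'I_n}}.

Definition uniform (n r : nat) (H : hypergraph n) : bool :=
  [forall e in H, #|e| == r].

Definition deg (n : nat) (H : hypergraph n) (v : 'I_n) : nat :=
  #|[set e in H | v \in e]|.
Definition maxdeg (n : nat) (H : hypergraph n) : nat :=
  \max_(v : 'I_n) deg H v.

(* phi : 'I_m -> 'I_n embeds a (not necessarily induced) copy of F into H:
   phi is injective and maps every edge of F onto an edge of H. *)
Definition is_copy (m n : nat) (F : hypergraph m) (H : hypergraph n)
  (phi : {ffun 'I_m -> 'I_n}) : bool :=
  injectiveb phi && [forall e in F, phi @: e \in H].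

Definition contains (m n : nat) (F : hypergraph m) (H : hypergraph n) : bool :=
  [exists phi : {ffun 'I_m -> 'I_n}, is_copy F H phi].

Definition has_disjoint_copies (k m n : nat) (F : hypergraph m)
  (H : hypergraph n) : Prop :=
  exists phi : 'I_k -> {ffun 'I_m -> 'I_n},
    (forall i, is_copy F H (phi i)) /\
    (forall i j, i != j -> [disjoint codom (phi i) & codom (phi j)]).

Definition ex (r N m : nat) (F : hypergraph m) : nat :=
  \max_(H : hypergraph N | uniform r H && ~~ contains F H) #|H|.

(* Main.v *)
Require Import Defs.
From mathcomp Require Import all_boot all_order all_algebra.
From mathcomp Require Import zify ring lra.
Import Order.TTheory GRing.Theory Num.Theory.


Lemma pascal_sum N j a : a <= N ->
  'C(N, j.+1) = 'C(N - a, j.+1) + \sum_(i < a) 'C(N - i.+1, j).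
Proof.
elim: a => [|a IH] ha; first by rewrite subn0 big_ord0 addn0.
rewrite IH ?(ltnW ha) // big_ord_recr /= [X in _ = _ + X]addnC addnA; congr (_ + _).
have -> : N - a = (N - a.+1).+1 by lia.
by rewrite binS.
Qed.

Lemma bin_lb s n j : s <= n -> 'C(n - s, j.+1) + s * 'C(n - s, j) <= 'C(n, j.+1).
Proof.
move=> hs; rewrite (pascal_sum n j s hs) leq_add2l.
rewrite -[s in s * _]card_ord -sum_nat_const.
apply: leq_sum => i _; apply: leq_bin2l; have := ltn_ord i; lia.
Qed.

Lemma bin_ub a N j : a <= N -> 'C(N, j.+1) <= 'C(N - a, j.+1) + a * 'C(N.-1, j).
Proof.
move=> ha; rewrite (pascal_sum N j a ha) leq_add2l.
rewrite -[a in a * _]card_ord -sum_nat_const.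
apply: leq_sum => i _; apply: leq_bin2l; lia.
Qed.

Lemma numA n m t r : 2 <= r -> 0 < t -> 2 <= m -> t * m <= n -> n < t * m + m ->
  m * 'C(n - t, r) <= m.-1 * 'C(n, r).
Proof.
move=> hr ht hm h1 h2.
have key : m * ((n - t) * (n - t).-1) <= m.-1 * (n * n.-1).
  have e1 : exists s, n = t * m + s /\ s < m by exists (n - t * m); lia.
  case: e1 => s [-> hs].
  case: m hm hs h1 h2 => [|[|m']] // hm hs _ _.
  case: t ht => // t' _.
  have -> : t'.+1 * m'.+2 + s - t'.+1 = t'.+1 * m'.+1 + s by lia.
  have -> : (t'.+1 * m'.+1 + s).-1 = t' * m'.+1 + m' + s by lia.
  have -> : (t'.+1 * m'.+2 + s).-1 = t' * m'.+2 + m'.+1 + s by lia.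
  rewrite /=.
  have h3 : s * s <= m'.+1 * s by rewrite leq_mul2r; lia.
  have h4 : m'.+1 * s <= m'.+1 * m'.+1 by rewrite leq_mul2l; lia.
  nia.
case: r hr => // [[//|r']] _.
have E1 := mul_bin_diag (n - t) r'.+1.
have E2 := mul_bin_diag (n - t).-1 r'.
have F1 := mul_bin_diag n r'.+1.
have F2 := mul_bin_diag n.-1 r'.
have M : 'C((n - t).-1.-1, r') <= 'C(n.-1.-1, r') by apply: leq_bin2l; lia.
have P : 0 < r'.+2 * r'.+1 by [].
rewrite -(leq_pmul2l P).
have GA : r'.+2 * r'.+1 * 'C(n - t, r'.+2) = (n - t) * (n - t).-1 * 'C((n - t).-1.-1, r').
  by rewrite mulnAC -E1 -mulnA [_ * r'.+1]mulnC -E2 mulnA.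
have GN : r'.+2 * r'.+1 * 'C(n, r'.+2) = n * n.-1 * 'C(n.-1.-1, r').
  by rewrite mulnAC -F1 -mulnA [_ * r'.+1]mulnC -F2 mulnA.
rewrite mulnCA GA [X in _ <= X]mulnCA GN.
apply: (@leq_trans (m * ((n - t) * (n - t).-1 * 'C(n.-2, r')))).
  by rewrite leq_mul2l leq_mul2l M !orbT.
by rewrite !mulnA leq_mul2r -!mulnA key orbT.
Qed.

Set Implicit Arguments. Unset Strict Implicit. Unset Printing Implicit Defensive.

Lemma card_bigcup_le (I T : finType) (P : pred I) (f : I -> {set T}) :
  #|\bigcup_(i | P i) f i| <= \sum_(i | P i) #|f i|.
Proof.
apply: (big_ind2 (fun (A : {set T}) b => #|A| <= b)).
- by rewrite cards0.
- move=> A1 b1 A2 b2 h1 h2; apply: leq_trans (leq_card_setU A1 A2) _.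
  exact: leq_add.
- by [].
Qed.

Lemma handshake n r (H : hypergraph n) : uniform r H ->
  \sum_(v : 'I_n) deg H v = r * #|H|.
Proof.
move=> /forallP hu.
have E : forall v, deg H v = \sum_(e in H) (v \in e).
  move=> v; rewrite /deg -sum1_card big_mkcond [RHS]big_mkcond /=.
  by apply: eq_bigr => e _; rewrite inE; case: (e \in H); case: (v \in e).
under eq_bigr do rewrite E.
rewrite exchange_big /=.
rewrite mulnC -sum_nat_const.
apply: eq_bigr => e eH.
rewrite -(eqP (implyP (hu e) eH)) -sum1_card [RHS]big_mkcond /=.
by apply: eq_bigr => v _; case: (v \in e).
Qed.


Lemma exists_subset (T : finType) (A : {set T}) k : k <= #|A| ->
  exists B : {set T}, B \subset A /\ #|B| = k.
Proof.
move=> hk.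
have : 0 < #|[set B : {set T} | B \subset A & #|B| == k]| by rewrite cards_draws bin_gt0.
case/card_gt0P => B; rewrite inE => /andP [h1 /eqP h2]; by exists B.
Qed.

Lemma move_copy m n (F : hypergraph m) (G : hypergraph n) (Y : {set 'I_n}) :
  (forall e, e \in G -> e \subset Y) -> m <= #|Y| ->
  forall psi, is_copy F G psi ->
  exists psi', is_copy F G psi' /\ (forall x, psi' x \in Y).
Proof.
move=> GY mY.
suff S : forall c (psi : {ffun 'I_m -> 'I_n}), #|[set x | psi x \notin Y]| <= c -> is_copy F G psi ->
  exists psi', is_copy F G psi' /\ (forall x, psi' x \in Y).
  by move=> psi; apply: S (leqnn _).
elim=> [|c IH] psi hc hpsi.
  exists psi; split=> // x; apply/negPn/negP => hx.
  have : x \in [set x | psi x \notin Y] by rewrite inE.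
  by move: hc; rewrite leqn0 cards_eq0 => /eqP ->; rewrite inE.
case: (leqP #|[set x | psi x \notin Y]| c) => [hc'|hc']; first exact: (IH psi).
have : 0 < #|[set x | psi x \notin Y]| by apply: leq_trans hc'.
case/card_gt0P => x; rewrite inE => hx.
move: (hpsi) => /andP [/injectiveP inj /forallP hE].
set C := [set z in codom psi].
have hC : #|C| <= m by rewrite cardsE card_codom // card_ord.
have hYC : #|Y :&: C| < m.
  have : Y :&: C \subset C :\ psi x.
    apply/subsetP => z; rewrite !inE => /andP [zY zC]; rewrite zC andbT.
    by apply/eqP => ezx; rewrite -ezx zY in hx.
  move/subset_leq_card => h.
  have := cardsD1 (psi x) C; rewrite inE codom_f /= => h2; apply: (leq_ltn_trans h); by move: hC; rewrite h2 add1n.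
have : 0 < #|Y :\: C| by rewrite cardsD; lia.
case/card_gt0P => y; rewrite !inE => /andP [yC yY].
have xnotin : forall e, e \in F -> x \notin e.
  move=> e eF; apply/negP => xe.
  have := hE e; rewrite eF /= => /GY /subsetP /(_ (psi x)).
  by rewrite imset_f // => /(_ isT); rewrite (negbTE hx).
pose psi' := [ffun z => if z == x then y else psi z].
have hpsi' : is_copy F G psi'.
  apply/andP; split.
    apply/injectiveP => z1 z2; rewrite !ffunE.
    case: eqP => [->|h1]; case: eqP => [->|h2] //.
      by move=> eyz; move: yC; rewrite eyz codom_f.
    by move=> eyz; move: yC; rewrite -eyz codom_f.
    by move/inj.
  apply/forallP => e; apply/implyP => eF.
  have -> : psi' @: e = psi @: e.
    apply: eq_in_imset => z ze; rewrite ffunE; case: eqP => // ezx.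
    by move: (xnotin e eF); rewrite -ezx ze.
  by have := hE e; rewrite eF.
apply: (IH psi') => //.
have : [set z | psi' z \notin Y] \subset [set z | psi z \notin Y] :\ x.
  apply/subsetP => z; rewrite !inE ffunE; case: eqP => [->|//]; by rewrite yY.
move/subset_leq_card => h.
have := cardsD1 x [set z | psi z \notin Y]; rewrite inE hx /= => h2; apply: (leq_trans h); by move: hc; rewrite h2 add1n ltnS.
Qed.

Lemma relabel r n N m (F : hypergraph m) (G : hypergraph n) (Y : {set 'I_n}) :
  #|Y| = N -> uniform r G -> (forall e, e \in G -> e \subset Y) ->
  (forall psi, ~~ is_copy F G psi) -> #|G| <= ex r N F.
Proof.
move=> hY /forallP hu GY nocopy.
pose g : 'I_N -> 'I_n := fun i => enum_val (cast_ord (esym hY) i).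
have ginj : injective g.
  move=> i j /enum_val_inj /(congr1 val) /= h; exact: val_inj.
have gY : forall i, g i \in Y by move=> i; exact: enum_valP.
have rangeY : Y \subset g @: setT.
  have sub : g @: setT \subset Y by apply/subsetP => y /imsetP [i _ ->].
  have : g @: setT == Y.
    by rewrite eqEcard sub /= (card_imset _ ginj) cardsT card_ord hY.
  by move/eqP ->.
have gK : forall e : {set 'I_n}, e \subset Y -> g @: (g @^-1: e) = e.
  move=> e eY; apply/setP => y; apply/imsetP/idP.
    by case=> i; rewrite inE => ie ->.
  move=> ye; have := subsetP rangeY y (subsetP eY y ye).
  by case/imsetP => i _ eyi; exists i; rewrite // inE -eyi.
pose G' : hypergraph N := [set g @^-1: e | e : {set 'I_n} in G].
have cardG : #|G'| = #|G|.
  apply: card_in_imset => e1 e2 h1 h2 he.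
  by rewrite -(gK e1 (GY e1 h1)) -(gK e2 (GY e2 h2)) he.
rewrite -cardG.
apply: (@leq_bigmax_cond _ (fun H0 : hypergraph N => uniform r H0 && ~~ contains F H0) (fun H0 => #|H0|) G').
apply/andP; split.
  apply/forallP => e'; apply/implyP => /imsetP [e eG ->].
  by rewrite -(card_imset _ ginj) gK ?GY // (implyP (hu e) eG).
apply/negP => /existsP [phi /andP [/injectiveP phiinj /forallP hE]].
pose psi := [ffun x => g (phi x)].
move: (nocopy psi) => /negP; apply; apply/andP; split.
  by apply/injectiveP => x y; rewrite !ffunE => /ginj /phiinj.
apply/forallP => e; apply/implyP => eF.
have := hE e; rewrite eF /= => /imsetP [e' e'G he'].
have -> : psi @: e = g @: (phi @: e).
  by rewrite -imset_comp; apply: eq_imset => x; rewrite ffunE.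
by rewrite he' gK ?GY.
Qed.

From Stdlib Require Import ClassicalEpsilon.

Lemma copies_bound k m n (F : hypergraph m) (H : hypergraph n) : 0 < m ->
  has_disjoint_copies k F H -> k <= n.
Proof.
move=> hm [phi [hc hd]].
pose x0 : 'I_m := Ordinal hm.
have inj : injective (fun i => phi i x0).
  move=> i j /= e; apply/eqP; apply/negP => /negP nij.
  have := disjointFr (hd i j nij) (codom_f (phi i) x0).
  by rewrite e codom_f.
by have := leq_card _ inj; rewrite !card_ord.
Qed.

Lemma max_family t m n (F : hypergraph m) (H : hypergraph n) : 0 < m -> m <= n ->
  ~ has_disjoint_copies t.+1 F H ->
  exists k (phi : 'I_k -> {ffun 'I_m -> 'I_n}), [/\ k <= t,
   (forall i, is_copy F H (phi i)),
   (forall i j, i != j -> [disjoint codom (phi i) & codom (phi j)]) &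
   (forall psi, is_copy F H psi -> (forall x i, psi x \notin codom (phi i)) -> False)].
Proof.
move=> hm hmn hno.
pose P k := if excluded_middle_informative (has_disjoint_copies k F H) then true else false.
have PE : forall k, P k <-> has_disjoint_copies k F H.
  by move=> k; rewrite /P; case: excluded_middle_informative.
have exP : exists k, P k.
  exists 0; apply/PE; exists (fun _ => [ffun x => widen_ord hmn x]).
  by split; case.
have ubP : forall k, P k -> k <= n by move=> k /PE; exact: copies_bound.
case: (ex_maxnP exP ubP) => k /PE [phi [hc hd]] kmax.
exists k, phi; split => //.
- rewrite leqNgt; apply/negP => htk; apply: hno.
  exists (fun i => phi (widen_ord htk i)); split => // i j nij; apply: hd.
  by apply: contra nij => /eqP /(congr1 val) /= e; apply/eqP; apply: val_inj.
- move=> psi hpsi hdis.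
  have : P k.+1.
    apply/PE.
    exists (fun i => if unlift ord_max i is Some j then phi j else psi); split.
      by move=> i; case: unliftP.
    move=> i j nij; case: unliftP => [a ea|ei]; case: unliftP => [b eb|ej].
    + apply: hd; by apply: contra nij => /eqP eab; rewrite ea eb eab.
    + rewrite disjoint_sym disjoint_subset; apply/subsetP => y /codomP [x ->].
      by rewrite inE /= (negbTE (hdis x a)).
    + rewrite disjoint_subset; apply/subsetP => y /codomP [x ->].
      by rewrite inE /= (negbTE (hdis x b)).
    + by move: nij; rewrite ei ej eqxx.
  by move/kmax; rewrite ltnn.
Qed.

Lemma finB1 (H h1 h2 h3 uD tC a b e : nat) : H <= h1 + h2 + h3 -> h1 <= uD -> h2 <= 0 ->
  h3 <= e -> uD <= tC -> b + tC <= a -> H <= a - b + e.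
Proof. lia. Qed.
Lemma finB2 (H h1 h2 h3 uD uC a b c e : nat) : H <= h1 + h2 + h3 -> h1 <= uD -> uD <= uC ->
  h2 <= c - b -> h3 <= e -> c + uC <= a -> b <= c -> H <= a - b + e.
Proof. lia. Qed.

Local Open Scope ring_scope.

Lemma keyR (R : realFieldType) n' r' t' m (d : R) D :
  (0 < m)%N -> 0 <= d -> d <= 1 / m%:R ->
  t'.+1%:R <= d * m%:R * n'.+2%:R / (r'.+1)%:R - r'.+2%:R ->
  D%:R <= (1 / m%:R - d) * ('C(n'.+1, r'.+1))%:R ->
  (m * D <= 'C(n'.+2 - t'.+1, r'.+1))%N.
Proof.
move=> hm hd0 hd1 ht hD.
have E1 := bin_ub t' n'.+1 r'.
have E2 := mul_bin_diag n'.+1 r'.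
rewrite subSS.
have mpos : (0 : R) < m%:R by rewrite ltr0n.
set M := m%:R in mpos hd1 ht hD *.
have dM : d * M <= 1.
  by move: hd1; rewrite ler_pdivlMr // mul1r.
have ht2 : t'.+1%:R * r'.+1%:R <= d * M * n'.+2%:R - r'.+2%:R * r'.+1%:R.
  have rp : (0 : R) < r'.+1%:R by rewrite ltr0n.
  move: ht; rewrite lerBrDr ler_pdivlMr //.
  rewrite mulrDl; lra.
have r1 : (1 : R) <= r'.+1%:R by rewrite ler1n.
have ht3 : t'%:R * r'.+1%:R <= d * M * n'.+1%:R.
  have eT : t'.+1%:R = t'%:R + 1 :> R by rewrite -natr1.
  have eN : n'.+2%:R = n'.+1%:R + 1 :> R by rewrite -natr1.
  have eR : r'.+2%:R = r'.+1%:R + 1 :> R by rewrite -natr1.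
  move: ht2; rewrite eT eN eR. nra.
have htn : (t' <= n'.+1)%N.
  rewrite -(ler_nat R).
  have : (0 : R) <= t'%:R by rewrite ler0n.
  have : (0 : R) <= n'.+1%:R by rewrite ler0n.
  have : (0 : R) <= d * M by rewrite mulr_ge0 // ltW.
  nra.
have {}E1 := E1 htn; rewrite /= in E1 E2.
set c1 := ('C(n'.+1, r'.+1))%:R : R.
set c2 := ('C(n', r'))%:R : R.
set cn := ('C(n'.+1 - t', r'.+1))%:R : R.
have c1pos : 0 <= c1 by rewrite ler0n.
have c2pos : 0 <= c2 by rewrite ler0n.
have rE1 : c1 <= cn + t'%:R * c2 by rewrite /c1 /cn /c2 -natrM -natrD ler_nat.
have rE2 : n'.+1%:R * c2 = r'.+1%:R * c1 by rewrite /c1 /c2 -!natrM E2.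
have ht4 : t'%:R * c2 <= d * M * c1.
  have np : (0 : R) < n'.+1%:R by rewrite ltr0n.
  rewrite -(ler_pM2l np) mulrCA rE2.
  nra.
have hMD : M * D%:R <= (1 - d * M) * c1.
  have := ler_wpM2l (ltW mpos) hD.
  have -> : M * ((1 / M - d) * c1) = (1 - d * M) * c1.
    by field; rewrite lt0r_neq0.
  by [].
rewrite -(ler_nat R) natrM -/M -/cn.
nra.
Qed.


Lemma keyR2 (R : realFieldType) n m r t (delta : R) D :
  (2 <= r)%N -> (2 <= n)%N -> (0 < m)%N -> (0 < t)%N ->
  0 <= delta -> delta <= 1 / m%:R ->
  t%:R <= delta * m%:R * n%:R / (r.-1)%:R - r%:R ->
  D%:R <= (1 / m%:R - delta) * ('C(n.-1, r.-1))%:R ->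
  (m * D <= 'C(n - t, r.-1))%N.
Proof.
case: r => [|[|r']] // _; case: n => [|[|n']] // _ hm; case: t => // t' _.
exact: keyR.
Qed.

Theorem lemma3p1 (R : realFieldType) (n m r t : nat) (delta : R)
  (F : hypergraph m) (H : hypergraph n) :
  (2 <= r)%N -> (r <= m)%N -> (m <= n)%N ->
  0 <= delta -> delta <= 1 / m%:R ->
  uniform r F ->
  (0 < t)%N ->
  t%:R <= delta * m%:R * n%:R / (r.-1)%:R - r%:R ->
  t%:R <= n%:R / m%:R :> R ->
  uniform r H ->
  ~ has_disjoint_copies t.+1 F H ->
  (maxdeg H)%:R <= (1 / m%:R - delta) * ('C(n.-1, r.-1))%:R ->
  (#|H| <= 'C(n, r) - 'C(n - t, r) + ex r (n - t) F)%N.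
Proof.
move=> hr hrm hmn hd0 hd1 uF ht Ht1 Ht2 uH hno HD.
have hm : (0 < m)%N by lia.
have htm : (t * m <= n)%N.
  rewrite -(ler_nat R) natrM -ler_pdivlMr //; by rewrite ltr0n.
set D := maxdeg H.
have hK : (m * D <= 'C(n - t, r.-1))%N.
  apply: (@keyR2 R n m r t delta D hr _ hm ht hd0 hd1 Ht1 HD); lia.
have rE : r = r.-1.+1 by lia.
case: (max_family hm hmn hno) => k [phi [hkt hc hd hext]].
pose U : {set 'I_n} := [set x | [exists i, x \in codom (phi i)]].
have hu : (#|U| <= k * m)%N.
  have sub : U \subset \bigcup_(i < k) [set x in codom (phi i)].
    apply/subsetP => x; rewrite inE => /existsP [i xi].
    by apply/bigcupP; exists i; rewrite ?inE.
  apply: leq_trans (subset_leq_card sub) _.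
  apply: leq_trans (card_bigcup_le _ _) _.
  rewrite -[k in (k * m)%N]card_ord -sum_nat_const.
  apply: leq_sum => i _; rewrite cardsE.
  have /andP [/injectiveP inj _] := hc i.
  by rewrite card_codom // card_ord.
have hut : (#|U| <= t * m)%N by apply: leq_trans hu _; rewrite leq_mul2r hkt orbT.
set u := #|U| in hu hut.
have degD : forall v, (deg H v <= D)%N by move=> v; exact: leq_bigmax.
have hDK : (D * m <= 'C(n.-1, r.-1))%N.
  rewrite mulnC; apply: leq_trans hK _; apply: leq_bin2l; lia.
case: (ltnP n (u + m)) => [caseA|caseB].
-
  have hs := handshake uH.
  have hs2 : (r * #|H| <= n * D)%N.
    rewrite -hs -[n in (n * D)%N]card_ord -sum_nat_const; exact: leq_sum.
  have hA : (m * 'C(n - t, r) <= m.-1 * 'C(n, r))%N.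
    apply: numA => //; lia.
  have hB := mul_bin_diag n r.-1; rewrite -rE in hB.
  have h1 : (r * (m * #|H|) <= r * 'C(n, r))%N.
    rewrite mulnCA -hB.
    apply: (@leq_trans (m * (n * D))); first by rewrite leq_mul2l hs2 orbT.
    by rewrite mulnCA leq_mul2l [(m * D)%N]mulnC hDK orbT.
  have h2 : (m * #|H| <= 'C(n, r))%N by rewrite -(@leq_pmul2l r) //; lia.
  have h3 : (m * (#|H| + 'C(n - t, r)) <= m * 'C(n, r))%N.
    rewrite mulnDr; apply: leq_trans (leq_add h2 hA) _.
    by rewrite -mulSn prednK.
  rewrite leq_pmul2l // in h3.
  lia.
- have hUc : #|~: U| = (n - u)%N by have := cardsC U; rewrite card_ord /u; lia.
  have htn : (t <= n)%N by apply: leq_trans htm; rewrite leq_pmulr.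
  have [W [hW hWU]] : exists W : {set 'I_n}, #|W| = t /\ ((W \subset U) || (U \subset W)).
    case: (leqP t u) => htu.
      have [W [h1 h2]] := exists_subset htu; exists W; by rewrite h1.
    have htu' : (t - u <= #|~: U|)%N by rewrite hUc; lia.
    have [B [h1 h2]] := exists_subset htu'.
    exists (U :|: B); split; last by rewrite subsetUl orbT.
    have e0 : #|U :&: B| = 0%N.
      apply/eqP; rewrite cards_eq0; apply/eqP/setP => x; rewrite in_setI in_set0.
      case xU: (x \in U) => //=; apply/negP => xB.
      by have := subsetP h1 x xB; rewrite in_setC xU.
    rewrite cardsU e0 h2 -/u; lia.
  pose X := U :|: W.
  pose H1 := [set e in H | ~~ [disjoint e & U]].
  pose H2 := [set e in H | [disjoint e & U] && ~~ (e \subset ~: X)].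
  pose H3 := [set e in H | e \subset ~: X].
  have hsplit : (#|H| <= #|H1| + #|H2| + #|H3|)%N.
    have : H \subset H1 :|: H2 :|: H3.
      apply/subsetP => e eH; rewrite !inE eH /=.
      by case: [disjoint e & U]; case: (e \subset ~: X).
    move/subset_leq_card => h; apply: leq_trans h _.
    apply: leq_trans (leq_card_setU _ _) _; rewrite leq_add2r.
    exact: leq_card_setU.
  have hH1 : (#|H1| <= u * D)%N.
    have : H1 \subset \bigcup_(v in U) [set e in H | v \in e].
      apply/subsetP => e; rewrite inE => /andP [eH].
      rewrite disjoint_subset => /subsetPn [v ve vU].
      apply/bigcupP; exists v; first by move: vU; rewrite inE negbK.
      by rewrite inE eH ve.
    move/subset_leq_card => h; apply: leq_trans h _.
    apply: leq_trans (card_bigcup_le _ _) _.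
    rewrite /u -sum_nat_const; apply: leq_sum => v _; exact: degD.
  have hH2 : (#|H2| <= 'C(n - u, r) - 'C(n - #|X|, r))%N.
    pose D1 := [set A : {set 'I_n} | A \subset ~: U & #|A| == r].
    pose D2 := [set A : {set 'I_n} | A \subset ~: X & #|A| == r].
    have D21 : D2 \subset D1.
      apply/subsetP => A; rewrite !inE => /andP [h1 ->]; rewrite andbT.
      apply: subset_trans h1 _; rewrite setCS; exact: subsetUl.
    have : H2 \subset D1 :\: D2.
      apply/subsetP => e; rewrite !inE => /andP [eH /andP [hdis hX]].
      rewrite (negbTE hX) /= (implyP (forallP uH e) eH) !andbT.
      apply/subsetP => x xe; rewrite inE; apply/negP => xU.
      by have := disjointFr hdis xe; rewrite xU.
    move/subset_leq_card => h; apply: leq_trans h _.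
    rewrite cardsDS // !cards_draws hUc.
    have -> : #|~: X| = (n - #|X|)%N by have := cardsC X; rewrite card_ord; lia.
    by [].
  have hH3 : (#|H3| <= ex r (n - t) F)%N.
    apply: (relabel (Y := ~: W)).
    - by have := cardsC W; rewrite card_ord hW; lia.
    - apply/forallP => e; apply/implyP; rewrite inE => /andP [eH _].
      exact: (implyP (forallP uH e) eH).
    - move=> e; rewrite inE => /andP [_ h]; apply: subset_trans h _.
      by rewrite setCS subsetUr.
    move=> psi; apply/negP => hpsi.
    have GY : forall e, e \in H3 -> e \subset ~: U.
      move=> e; rewrite inE => /andP [_ h]; apply: subset_trans h _.
      by rewrite setCS subsetUl.
    have hmU : (m <= #|~: U|)%N by rewrite hUc; lia.
    have [psi' [hp1 hp2]] := move_copy GY hmU hpsi.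
    apply: (hext psi').
      move: hp1 => /andP [hi /forallP hE]; apply/andP; split => //.
      apply/forallP => e; apply/implyP => eF; move: (implyP (hE e) eF).
      by rewrite inE => /andP [].
    move=> x i; apply/negP => hxi; move: (hp2 x); rewrite !inE => /negP; apply.
    by apply/existsP; exists i.
  case/orP: hWU => hWU.
  + have eX : X = U by apply/setUidPl.
    rewrite eX -/u subnn in hH2.
    have f1 : (u * D <= t * 'C(n - t, r.-1))%N.
      apply: leq_trans (_ : (t * m * D <= _)%N); first by rewrite leq_mul2r hut orbT.
      by rewrite -mulnA leq_mul2l hK orbT.
    have bl := bin_lb t n r.-1 htn; rewrite -rE in bl.
    exact: (finB1 hsplit hH1 hH2 hH3 f1 bl).
  + have eX : X = W by apply/setUidPr.
    have hut2 : (u <= t)%N by rewrite -hW; exact: subset_leq_card.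
    rewrite eX hW in hH2.
    have f1 : (u * D <= u * 'C(n - u, r.-1))%N.
      apply: leq_trans (_ : (u * (m * D) <= _)%N).
        by rewrite leq_mul2l leq_pmull // orbT.
      rewrite leq_mul2l; apply/orP; right; apply: leq_trans hK _.
      apply: leq_bin2l; lia.
    have bl := bin_lb u n r.-1 (ltac:(lia)); rewrite -rE in bl.
    have mono : ('C(n - t, r) <= 'C(n - u, r))%N by apply: leq_bin2l; lia.
    exact: (finB2 hsplit hH1 f1 hH2 hH3 bl mono).
Qed.
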